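(* For every positive integer $p$, there is a deterministic $p$-pass streaming algorithm for \textsc{Find-Duplicate} that uses $\widetilde{O}(n^{1/p})$ memory (where $\widetilde{O}$ hides factors polylogarithmic in $n$).
   Context: \textsc{Find-Duplicate}: the input is a stream of $3n/2$ integers, each in $\{1,\dots,n\}$; the goal is to output an integer that appears at least twice in the stream. A $p$-pass streaming algorithm is allowed to read the entire input stream, in order, $p$ times, maintaining only its memory state between and during passes. *)

(* Defs.v *)
From Stdlib Require Import Reals.
From mathcomp Require Import all_boot.
Set Implicit Arguments. Unset Strict Implicit. Unset Printing Implicit Defensive.

(* Nothing but the memory
   state is kept between and during passes. *)
Record streamAlg := StreamAlg {
  sa_state : finType;
  sa_init  : sa_state;
  sa_step  : sa_state -> nat -> sa_state;
  sa_out   : sa_state -> nat }.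

Definition run_passes (A : streamAlg) (p : nat) (s : seq nat) : sa_state A :=
  iter p (fun q => foldl (@sa_step A) q s) (@sa_init A).

Definition fd_input (n : nat) (s : seq nat) : bool :=
  (size s == (3 * n)./2) && all (fun x => (0 < x <= n)) s.

Definition solves_find_dup (A : streamAlg) (p n : nat) : Prop :=
  forall s, fd_input n s -> 1 < count_mem (@sa_out A (run_passes A p s)) s.

Definition uses_memory (A : streamAlg) (bits : nat) : Prop :=
  #|sa_state A| <= 2 ^ bits.

(* Main.v *)
Require Import Defs.
From Stdlib Require Import Reals.
From mathcomp Require Import all_boot.
From Stdlib Require Import Lra.
From mathcomp Require Import zify.
Set Implicit Arguments. Unset Strict Implicit. Unset Printing Implicit Defensive.

Definition St (p b L : nat) : finType :=
  ('I_p.+1 * 'I_(b^p).+1 * 'I_L.+1 * {ffun 'I_b -> 'I_L.+1})%type.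

Definition mk p b L (i P j : nat) (c : nat -> nat) : St p b L :=
  (inord i, inord P, inord j, [ffun k : 'I_b => inord (c k)]).

Definition cv b L (c : {ffun 'I_b -> 'I_L.+1}) (d : nat) : nat :=
  if (insub d : option 'I_b) is Some k then val (c k) else 0.

Definition blk (m Q x : nat) : bool := x.-1 %/ m == Q.
Definition aN n m Q := count (blk m Q) (iota 1 n).

Definition stepN n p b L (i P j : nat) (c : nat -> nat) (x : nat) : St p b L :=
  let m := b ^ (p - i.+1) in
  let c' := fun d => c d + blk m (P*b+d) x in
  if j.+1 == L then
    mk p b L i.+1 (P*b + find (fun d => aN n m (P*b+d) < c' d) (iota 0 b)) 0 (fun _ => 0)
  else mk p b L i P j.+1 c'.

Definition step n p b L (q : St p b L) (x : nat) : St p b L :=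
  let: (i, P, j, c) := q in stepN n p b L i P j (cv c) x.

Definition outF p b L (q : St p b L) : nat := let: (i, P, j, c) := q in (val P).+1.

Definition Alg n p b L : streamAlg :=
  @StreamAlg (St p b L) (mk p b L 0 0 0 (fun _ => 0)) (@step n p b L) (@outF p b L).

Lemma cv_mk b L (c : nat -> nat) d : d < b -> c d <= L ->
  cv [ffun k : 'I_b => (inord (c k) : 'I_L.+1)] d = c d.
Proof. by move=> db cd; rewrite /cv insubT /= ffunE inordK. Qed.

Lemma mk_ext p b L i P j c1 c2 : (forall d, d < b -> c1 d = c2 d) ->
  mk p b L i P j c1 = mk p b L i P j c2.
Proof. by move=> h; rewrite /mk; congr (_,_); apply/ffunP=> k; rewrite !ffunE h. Qed.

Lemma stepN_ext n p b L i P j c1 c2 x : (forall d, d < b -> c1 d = c2 d) ->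
  stepN n p b L i P j c1 x = stepN n p b L i P j c2 x.
Proof.
move=> h; rewrite /stepN; case: ifP => _.
  congr (mk _ _ _ _ (_ + _) _ _); apply: eq_in_find => d; rewrite mem_iota => /andP[_ hd].
  by rewrite h.
by apply: mk_ext => d hd; rewrite h.
Qed.

Lemma step_mk n p b L i P j c x : i <= p -> P <= b^p -> j <= L ->
  (forall d, d < b -> c d <= L) ->
  step n (mk p b L i P j c) x = stepN n p b L i P j c x.
Proof.
move=> hi hP hj hc; rewrite /step /mk !inordK //.
by apply: stepN_ext => d hd; rewrite cv_mk // hc.
Qed.

Lemma prefix n p b L i P s1 : i <= p -> P <= b^p -> size s1 < L ->
  foldl (@step n p b L) (mk p b L i P 0 (fun _ => 0)) s1 =
  mk p b L i P (size s1) (fun d => count (blk (b^(p-i.+1)) (P*b+d)) s1).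
Proof.
move=> hi hP; elim/last_ind: s1 => [|s1 x IH] //.
rewrite size_rcons foldl_rcons => hs.
rewrite IH ?(ltnW hs) // step_mk //; last first.
- by move=> d _; apply: leq_trans (count_size _ _) (ltnW (ltnW hs)).
- exact: ltnW (ltnW hs).
rewrite /stepN (ltn_eqF hs); apply: mk_ext => d _.
by rewrite -cats1 count_cat /= addn0.
Qed.

Lemma sum_digit b y P : 0 < b -> ((y %/ b == P) : nat) = \sum_(0 <= d < b) (y == P*b+d).
Proof.
move=> b0; rewrite big_mkord; case: eqP => [<-|ne].
  rewrite (bigD1 (Ordinal (ltn_pmod y b0))) //= {1}(divn_eq y b) eqxx big1 // => k hk.
  case: eqP => // e; move: hk; rewrite -val_eqE /=.
  by rewrite {1}e modnMDl modn_small // eqxx.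
rewrite big1 // => k _; case: eqP => // e; exfalso; apply: ne.
by rewrite e divnMDl // divn_small // addn0.
Qed.

Lemma split_count b m P u : 0 < b ->
  count (blk (m*b) P) u = \sum_(0 <= d < b) count (blk m (P*b+d)) u.
Proof.
move=> b0; elim: u => [|x u IH] /=; first by rewrite big1.
rewrite IH big_split /=; congr (_ + _).
by rewrite /blk divnMA sum_digit.
Qed.

Lemma exists_lt b (f g : nat -> nat) :
  \sum_(0 <= d < b) f d < \sum_(0 <= d < b) g d -> has (fun d => f d < g d) (iota 0 b).
Proof.
move=> h; apply/negPn/negP => /hasPn H; move: h; rewrite ltnNge => /negP; apply.
rewrite big_nat_cond [X in _ <= X]big_nat_cond; apply: leq_sum => d /andP[hd _].
by rewrite leqNgt; apply: H; rewrite mem_iota.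
Qed.

Definition Inv n p b s i P :=
  P < b^i /\ aN n (b^(p-i)) P < count (blk (b^(p-i)) P) s.

Lemma pass n p b L s i P : 0 < b -> 0 < L -> size s = L -> i < p -> Inv n p b s i P ->
  exists P', Inv n p b s i.+1 P' /\
    foldl (@step n p b L) (mk p b L i P 0 (fun _ => 0)) s = mk p b L i.+1 P' 0 (fun _ => 0).
Proof.
move=> b0 L0 hs ip [hP hI]; have ip' := ltnW ip.
have hPp : P <= b^p by apply: ltnW (leq_trans hP (leq_pexp2l b0 (ltnW ip))).
have ep : b ^ (p - i) = b ^ (p - i.+1) * b by rewrite -expnSr subnSK.
set m := b ^ (p - i.+1) in ep.
set pr := fun d => aN n m (P*b+d) < count (blk m (P*b+d)) s.
have hh : has pr (iota 0 b).
  apply: exists_lt; rewrite /aN -!split_count // -ep; exact: hI.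
exists (P*b + find pr (iota 0 b)); split.
  have fb : find pr (iota 0 b) < b by rewrite -[X in _ < X](size_iota 0 b) -has_find.
  split.
    rewrite expnSr; apply: (@leq_trans (P*b + b)); first by rewrite ltn_add2l.
    by rewrite -mulSnr leq_mul2r hP orbT.
  rewrite -/m.
  have := nth_find 0 hh; rewrite nth_iota // add0n; exact.
have [s1 [x Es]] : exists s1 x, s = rcons s1 x.
  move: hs L0; case: (lastP s) => [<- //|s1 x _ _]; by exists s1, x.
rewrite [in foldl _ _ s]Es foldl_rcons prefix //; last by rewrite -hs Es size_rcons.
rewrite step_mk //; last first.
- move=> d _; rewrite -hs Es size_rcons; exact: leq_trans (count_size _ _) (leqnSn _).
- by rewrite -hs Es size_rcons.
rewrite /stepN -hs Es size_rcons eqxx; congr (mk _ _ _ _ (_ + _) _ _).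
by apply: eq_find => d; rewrite /pr Es -cats1 count_cat /= addn0.
Qed.

Lemma passes n p b L s : 0 < b -> 0 < L -> size s = L -> Inv n p b s 0 0 ->
  forall i, i <= p -> exists P, Inv n p b s i P /\
   run_passes (Alg n p b L) i s = mk p b L i P 0 (fun _ => 0).
Proof.
move=> b0 L0 hs h0; elim=> [|i IH] hi; first by exists 0.
have [P [hI hr]] := IH (ltnW hi).
have [P' [hI' hf]] := pass b0 L0 hs hi hI.
exists P'; split => //.
by rewrite /run_passes iterS -/(run_passes _ i s) hr /= hf.
Qed.

Lemma half_gt n : 2 <= n -> n < (3 * n)./2.
Proof.
move=> hn; rewrite -(ltn_pmul2r (isT : 0 < 2)).
have := odd_double_half (3 * n); rewrite -muln2.
case: (odd (3*n)) => /=; lia.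
Qed.

Lemma alg_ok n p b : 0 < b -> 2 <= n -> n <= b^p ->
  solves_find_dup (Alg n p b (3 * n)./2) p n.
Proof.
move=> b0 n2 nb s /andP[/eqP hs hall].
have L0 : 0 < (3 * n)./2 by apply: leq_ltn_trans (half_gt n2).
have h0 : Inv n p b s 0 0.
  split; first by [].
  rewrite subn0 /aN.
  have -> : count (blk (b ^ p) 0) (iota 1 n) = n.
    rewrite -[X in _ = X](size_iota 1 n) -count_predT; apply: eq_in_count => x.
    rewrite mem_iota /blk => /andP[h1 h2]; rewrite divn_small //; lia.
  have -> : count (blk (b ^ p) 0) s = (3 * n)./2.
    rewrite -hs -count_predT; apply: eq_in_count => x hx.
    move/allP: hall => /(_ x hx) /andP[h1 h2].
    rewrite /blk divn_small //; lia.
  exact: half_gt.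
have [P [[hP hI] hr]] := passes b0 L0 hs h0 (leqnn p).
rewrite hr /= inordK; last by apply: ltnW.
move: hI; rewrite subnn expn0 /aN.
have -> : count (blk 1 P) (iota 1 n) = count_mem P.+1 (iota 1 n).
  apply: eq_in_count => x; rewrite mem_iota /blk divn1 => /andP[h1 _].
  by case: x h1.
have -> : count (blk 1 P) s = count_mem P.+1 s.
  apply: eq_in_count => x hx; move/allP: hall => /(_ x hx) /andP[h1 _].
  by rewrite /blk divn1; case: x h1 {hx}.
rewrite count_uniq_mem ?iota_uniq //.
case E: (_ \in _) => /= h //.
have : P.+1 \in s by rewrite -has_pred1 has_count.
move/allP: hall => H /H /andP[_ h2].
by move: E; rewrite mem_iota; lia.
Qed.

Lemma choose_b n p : 0 < p -> 2 <= n ->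
  exists b, [/\ 2 <= b, n <= b^p, b <= n & (b <= 2 \/ b.-1 ^ p < n)].
Proof.
move=> p0 n2.
have ex : exists b, (2 <= b) && (n <= b^p).
  exists n; rewrite n2 /=; rewrite -{1}(expn1 n); apply: leq_pexp2l => //; lia.
case: (ex_minnP ex) => b /andP[b2 nb] hmin.
exists b; split => //.
  by apply: hmin; rewrite n2 /= -{1}(expn1 n); apply: leq_pexp2l => //; lia.
case: (leqP b 2) => hb; [by left | right].
rewrite ltnNge; apply/negP => h.
have := hmin b.-1; rewrite h andbT; lia.
Qed.

Definition Kn n := (trunc_log 2 (3 * n)).+1.

Lemma card_St n p b : 2 <= n -> 2 <= b -> b <= n ->
  #|St p b (3 * n)./2| <= 2 ^ (p + (1 + Kn n * p) + Kn n + Kn n * b).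
Proof.
move=> n2 b2 bn.
set L := (3 * n)./2; set K := Kn n.
have hT : 3 * n < 2 ^ K by apply: trunc_log_ltn.
have hL : L.+1 <= 2 ^ K.
  have := odd_double_half (3 * n); rewrite -/L -muln2 => h; lia.
rewrite /St !card_prod card_ffun !card_ord.
apply: (@leq_trans (2^p * 2^(1 + K*p) * 2^K * 2^(K*b))); last by rewrite -!expnD.
apply: leq_mul; first apply: leq_mul; first apply: leq_mul.
- by apply: ltn_expl.
- rewrite expnD expn1 expnM; apply: (@leq_trans (2 * b ^ p)).
    by rewrite mul2n -addnn -addn1 leq_add2l expn_gt0; lia.
  rewrite leq_mul2l /=; have [->|p0] := posnP p; first by [].
  rewrite leq_exp2r //; lia.
- exact: hL.
- rewrite expnM; have [->|b0] := posnP b; first by [].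
  by rewrite leq_exp2r.
Qed.
Open Scope R_scope.

Lemma INR_expn m k : INR (m ^ k)%N = INR m ^ k.
Proof. elim: k => [|k IH]; first by rewrite expn0. by rewrite expnS mult_INR IH. Qed.

Lemma ln_le' x y : 0 < x -> x <= y -> ln x <= ln y.
Proof.
move=> hx hxy; case: (Rle_lt_or_eq_dec _ _ hxy) => h.
  by apply: Rlt_le; apply: ln_increasing.
by rewrite h; apply: Rle_refl.
Qed.

Lemma ln2_pos : 0 < ln 2.
Proof. have := ln_lt_2; lra. Qed.

Lemma lnn_pos n : (2 <= n)%N -> 0 < ln (INR n).
Proof.
move=> n2; apply: (Rlt_le_trans _ _ _ ln2_pos); apply: ln_le'; first lra.
by have := le_INR 2 n (ssrnat.leP n2); rewrite /=; lra.
Qed.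

Lemma INR_pos m : (0 < m)%N -> 0 < INR m.
Proof. by move=> /ssrnat.ltP h; apply: lt_0_INR. Qed.

Lemma K_bound n : (2 <= n)%N -> INR (Kn n) * ln 2 <= 4 * ln (INR n).
Proof.
move=> n2.
have h : (2 ^ Kn n <= n ^ 4)%N.
  have := @trunc_logP 2 (3 * n) isT ltac:(lia).
  rewrite /Kn expnS !expnS expn0 muln1 => h.
  have h4 : (4 <= n * n)%N by nia.
  have h8 : (8 <= n * (n * n))%N by nia.
  have : (8 * n <= n * (n * (n * n)))%N by nia.
  lia.
have h' := le_INR _ _ (ssrnat.leP h).
rewrite !INR_expn in h'.
have i2 : 0 < INR 2 by simpl; lra.
have := ln_le' (pow_lt _ (Kn n) i2) h'.
rewrite !ln_pow //; last by apply: INR_pos; lia.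
have -> : INR 4 = 4 by simpl; ring. have -> : INR 2 = 2 by simpl; ring. lra.
Qed.

Lemma b_bound n p b : (0 < p)%N -> (2 <= n)%N -> (2 <= b)%N -> (b <= 2 \/ b.-1 ^ p < n)%N ->
  INR b <= 2 * Rpower (INR n) (/ INR p).
Proof.
move=> p0 n2 b2 hb.
set r := Rpower (INR n) (/ INR p).
have n0 : 0 < INR n by apply: INR_pos; lia.
have r1 : 1 <= r.
  rewrite /r -(Rpower_O (INR n)) //; apply: Rle_Rpower.
    by have := le_INR 2 n (ssrnat.leP n2); simpl; lra.
  by apply: Rlt_le; apply: Rinv_0_lt_compat; apply: INR_pos.
have rp : r ^ p = INR n.
  rewrite -Rpower_pow; last lra.
  rewrite /r Rpower_mult Rinv_l ?Rpower_1 //.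
  by apply: not_0_INR; lia.
case: hb => hb.
  have := le_INR _ _ (ssrnat.leP hb); simpl; lra.
have hlt : INR b.-1 < r.
  apply: Rnot_le_lt => hle.
  have := pow_incr r (INR b.-1) p ltac:(lra).
  rewrite rp -INR_expn => h.
  have := lt_INR _ _ (ssrnat.ltP hb); lra.
have : b = (b.-1 + 1)%N by lia.
move=> ->; rewrite plus_INR /=.
have : 1 <= INR b.-1 by apply: (le_INR 1); apply/ssrnat.leP; lia.
lra.
Qed.

Lemma real_final (A K b bits : nat) (r lnn : R) :
  INR bits <= INR A * INR K * INR b -> INR K * ln 2 <= 4 * lnn ->
  INR b <= 2 * r ->
  INR bits <= INR A * 8 / ln 2 * r * (lnn ^ 1).
Proof.
move=> h1 h2 h3.
have l2 := ln2_pos.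
have hK : INR K <= 4 * lnn / ln 2.
  apply: (Rmult_le_reg_r (ln 2)) => //.
  by rewrite /Rdiv Rmult_assoc Rinv_l; lra.
have A0 := pos_INR A; have K0 := pos_INR K; have b0 := pos_INR b.
apply: (Rle_trans _ _ _ h1).
apply: (Rle_trans _ (INR A * (4 * lnn / ln 2) * (2 * r))).
  apply: Rmult_le_compat => //; first nra.
  by apply: Rmult_le_compat_l.
right; field; lra.
Qed.
Close Scope R_scope.

Theorem mainTheorem2 :
  forall p : nat, 0 < p ->
  exists (C : R) (k : nat),
    forall n : nat, 2 <= n ->
      exists (A : streamAlg) (bits : nat),
        solves_find_dup A p n /\ uses_memory A bits /\
        Rle (INR bits) (Rmult (Rmult C (Rpower (INR n) (Rinv (INR p)))) (pow (ln (INR n)) k)).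
Proof.
move=> p hp.
exists (Rdiv (Rmult (INR (2 * p + 3)) (IZR 8)) (ln (IZR 2))), 1.
move=> n hn.
have [b [b2 nb bn hb]] := choose_b hp hn.
exists (Alg n p b (3 * n)./2), (p + (1 + Kn n * p) + Kn n + Kn n * b).
split; first by apply: alg_ok => //; lia.
split; first exact: card_St.
apply: real_final (K_bound hn) (b_bound hp hn b2 hb).
rewrite -!mult_INR; apply: le_INR; apply/ssrnat.leP.
rewrite /Kn; move: (trunc_log 2 (3 * n)) => t; clear -b2; nia.
Qed.
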